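(* Let $n\ge3$ and $t\ge0$ be integers, and let $\mathcal{T}$ be the conjugacy class of transpositions of $\mathfrak{S}_n$. Define $$M_1^{(n)}(t)=\frac12\sum_{\sigma\in\mathfrak{E}(\mathcal{T},t)}\left|\sum_{\lambda\in\{(n-1,1),\,(2,1^{n-2})\}}\frac{d_\lambda}{n!}\chi^\lambda(\mathcal{T})^t\,\mathrm{ch}^\lambda(\sigma)\right|.$$ Then $$\left|M_1^{(n)}(t)-\frac{n-1}{e}\left(\frac{n-3}{n-1}\right)^t\right|\le\frac1{(n-2)!}.$$
   Context: For $\lambda\vdash n$, $\mathrm{ch}^\lambda$ is the irreducible character of $\mathfrak{S}_n$, $d_\lambda$ its dimension and $\chi^\lambda=\mathrm{ch}^\lambda/d_\lambda$; $\chi^\lambda(\mathcal{T})$ is its value at a transposition. $\mathfrak{E}(\mathcal{T},t)=\mathfrak{S}_n\setminus\mathfrak{A}_n$ if $t$ is odd and $\mathfrak{A}_n$ (the alternating group) if $t$ is even. The convention $0^0=1$ is used. *)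

(* Defs.v *)
From HB Require Import structures.
From mathcomp Require Import all_boot all_order all_algebra all_fingroup.
From mathcomp Require Import all_classical all_reals all_analysis.
Set Implicit Arguments. Unset Strict Implicit. Unset Printing Implicit Defensive.
Import Order.TTheory GRing.Theory Num.Theory.
Local Open Scope ring_scope.

(* Irreducible character of S_n for lambda = (n-1,1): the standard character,
   ch(sigma) = #fixed points of sigma - 1. *)
Definition ch_std (R : realType) (n : nat) (s : 'S_n) : R :=
  (#|[set i | s i == i]|)%:R - 1.

(* Irreducible character for lambda = (2,1^{n-2}) = sign (x) standard. *)
Definition ch_alt (R : realType) (n : nat) (s : 'S_n) : R :=
  (-1) ^+ (odd_perm s) * ch_std R s.

Definition dimch (R : realType) (n : nat) (ch : 'S_n -> R) : R := ch 1%g.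
Definition chi_norm (R : realType) (n : nat) (ch : 'S_n -> R) (s : 'S_n) : R :=
  ch s / dimch ch.

(* A representative transposition (0 1) of the class T (n >= 2). *)
Definition transp0 (n : nat) : 'S_n :=
  match n return 'S_n with
  | n'.+2 => tperm (ord0 : 'I_n'.+2) (lift ord0 (ord0 : 'I_n'.+1))
  | _ => 1%g
  end.

(* The set E(T,t): odd permutations if t odd, even ones if t even. *)
Definition inE_T (n t : nat) (s : 'S_n) : bool := odd_perm s == odd t.

Definition M1 (R : realType) (n t : nat) : R :=
  2^-1 * \sum_(s : 'S_n | inE_T t s)
    `| \sum_(ch <- [:: ch_std R (n:=n); ch_alt R (n:=n)])
         (dimch ch / (n`!)%:R * (chi_norm ch (transp0 n)) ^+ t * ch s) |.

(* Main.v *)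
Require Import Defs.
From HB Require Import structures.
From mathcomp Require Import all_boot all_order all_algebra all_fingroup.
From mathcomp Require Import all_classical all_reals all_analysis.
From mathcomp Require Import ring lra.
From mathcomp Require Import fintype finset.
From mathcomp Require Import zify.
Import Order.TTheory GRing.Theory Num.Theory.
Local Open Scope ring_scope.

Lemma sum_sign_perm_on (R : realType) n (B : {set 'I_n}) :
  \sum_(s : 'S_n | perm_on B s) ((-1) ^+ odd_perm s : R) = (#|B| <= 1)%N%:R.
Proof.
case: (leqP #|B| 1) => hB.
  rewrite (bigD1 1%g) ?perm_on1 //= big1 ?addr0 ?odd_perm1 //.
  by move=> s /andP[hs ns]; rewrite (perm_on_id hs hB) eqxx in ns.
have [x [y [xB yB xy]]] : exists x y, [/\ x \in B, y \in B & x != y].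
  by move/card_gt1P: hB => [x [y [? ? ?]]]; exists x, y.
set t := tperm x y.
have tB : perm_on B t.
  rewrite /perm_on; apply/fintype.subsetP => z hz; have := fintype.subsetP (tperm_on x y) z hz.
  by rewrite !inE => /orP[]/eqP->.
set S := \sum_(s | _) _.
have : S = - S.
  rewrite /S {1}(reindex_inj (mulgI t)) /= -sumrN; apply: eq_big => s.
    apply/idP/idP => h; last exact: perm_onM.
    by rewrite -(tpermKg x y s); apply: perm_onM.
  move=> _; rewrite odd_mul_tperm xy /=.
  by case: (odd_perm s); rewrite /= ?expr0 ?expr1 ?opprK.
rewrite (_ : false%:R = 0 :> R) //.
move=> h; lra.
Qed.

Lemma sub_Fx n (K : {set 'I_n}) (s : 'S_n) :
  (K \subset [set i | s i == i]) = perm_on (~: K) s.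
Proof.
rewrite /perm_on; apply/idP/idP => H; apply/fintype.subsetP => x.
  rewrite !inE => hx; apply/negP => xK.
  by have := fintype.subsetP H x xK; rewrite inE (negbTE hx).
move=> xK; rewrite inE; apply/negPn/negP => hx.
by have := fintype.subsetP H x hx; rewrite inE xK.
Qed.

Lemma sumA1 (R : realType) n (K : {set 'I_n}) :
  \sum_(s : 'S_n) ((K \subset [set i | s i == i])%:R : R) = ((n - #|K|)`!)%:R.
Proof.
rewrite (eq_bigr (fun s => if perm_on (~:K) s then 1 else 0)); last first.
  by move=> s _; rewrite sub_Fx; case: (perm_on _ s).
rewrite -big_mkcond /= (eq_bigl (fun s => s \in perm_on (~:K))) //.
rewrite sumr_const card_perm.
by rewrite [#|~: K|]cardsCs finset.setCK card_ord.
Qed.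

Lemma sumA2 (R : realType) n (K : {set 'I_n}) :
  \sum_(s : 'S_n) ((K \subset [set i | s i == i])%:R * (-1) ^+ odd_perm s : R)
   = ((n - #|K| <= 1)%N)%:R.
Proof.
rewrite (eq_bigr (fun s => if perm_on (~:K) s then (-1) ^+ odd_perm s else 0)); last first.
  by move=> s _; rewrite sub_Fx; case: (perm_on _ s); rewrite ?mul1r ?mul0r.
rewrite -big_mkcond /= sum_sign_perm_on.
by rewrite [#|~: K|]cardsCs finset.setCK card_ord.
Qed.

Lemma incl_excl (R : realType) (T : finType) (F : {set T}) :
  \sum_(K : {set T}) ((K \subset F)%:R * (-1) ^+ #|K| : R) = (F == set0)%:R.
Proof.
case: (set_0Vmem F) => [->|[x xF]].
  rewrite eqxx (bigD1 set0) //= sub0set cards0 big1 ?addr0 ?mul1r //.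
  by move=> K nK; rewrite subset0 (negbTE nK) mul0r.
have -> : (F == set0) = false by apply/negbTE/set0Pn; exists x.
set phi := fun K : {set T} => if x \in K then K :\ x else x |: K.
have phiK : involutive phi.
  move=> K; rewrite /phi; case: (boolP (x \in K)) => xK.
    by rewrite setD11 setD1K.
  by rewrite setU11 setU1K.
set S := \sum_(K : {set T}) _.
have : S = - S.
  rewrite /S {1}(reindex_inj (inv_inj phiK)) /= -sumrN; apply: eq_bigr => K _.
  rewrite /phi; case: (boolP (x \in K)) => xK.
    have -> : (K \subset F) = (K :\ x \subset F).
      by rewrite -{1}(setD1K xK) subUset sub1set xF.
    by rewrite (cardsD1 x K) xK exprS mulN1r mulrN opprK.
  have -> : (x |: K \subset F) = (K \subset F) by rewrite subUset sub1set xF.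
  by rewrite cardsU1 xK exprS mulN1r mulrN.
move=> h; rewrite (_ : false%:R = 0 :> R) //; lra.
Qed.

Lemma sum_by_card (R : realType) (T : finType) (f : nat -> R) :
  \sum_(K : {set T}) f #|K| = \sum_(k < #|T|.+1) ('C(#|T|, k))%:R * f k.
Proof.
rewrite (partition_big (fun K : {set T} => (inord #|K| : 'I_#|T|.+1)) predT) //=.
apply: eq_bigr => k _.
have hK : forall K : {set T}, (inord #|K| == k :> 'I_#|T|.+1) = (#|K| == k).
  by move=> K; rewrite -val_eqE /= inordK // ltnS max_card.
rewrite (eq_bigr (fun _ => f k)); last by move=> K; rewrite hK => /eqP->.
rewrite (eq_bigl (fun K : {set T} => K \in [set K : {set T} | #|K| == k])); last first.
  by move=> K; rewrite inE hK.
by rewrite sumr_const card_draws mulr_natl.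
Qed.

Lemma my_card_sum (R : realType) (T : finType) (A : {set T}) :
  (#|A|%:R : R) = \sum_(i : T) (i \in A)%:R.
Proof.
rewrite -sum1_card natr_sum big_mkcond /=; apply: eq_bigr => i _.
by case: (i \in A).
Qed.

Lemma der_sum (R : realType) n (w : 'S_n -> R) :
  \sum_(s : 'S_n) ([set i | s i == i] == set0)%:R * w s =
  \sum_(K : {set 'I_n}) (-1) ^+ #|K| *
      \sum_(s : 'S_n) (K \subset [set i | s i == i])%:R * w s.
Proof.
rewrite (eq_bigr (fun s : 'S_n => \sum_(K : {set 'I_n})
   (K \subset [set i | s i == i])%:R * (-1) ^+ #|K| * w s)); last first.
  by move=> s _; rewrite -mulr_suml incl_excl.
rewrite exchange_big; apply: eq_bigr => K _; rewrite mulr_sumr.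
by apply: eq_bigr => s _; rewrite mulrCA mulrA.
Qed.

Lemma sum_parity (R : realType) n (b : bool) (g : 'S_n -> R) :
  \sum_(s : 'S_n | odd_perm s == b) g s =
  2^-1 * (\sum_s g s + (-1) ^+ b * \sum_s (-1) ^+ odd_perm s * g s).
Proof.
rewrite big_mkcond /= mulr_sumr -big_split mulr_sumr /=; apply: eq_bigr => s _.
by case: (odd_perm s); case: b => /=; rewrite ?expr0 ?expr1; lra.
Qed.

Lemma der_one (R : realType) n :
  \sum_(s : 'S_n) ([set i | s i == i] == set0)%:R * (1 : R) =
  (n`!)%:R * \sum_(k < n.+1) (-1) ^+ k / ((k`!)%:R : R).
Proof.
rewrite der_sum.
rewrite (eq_bigr (fun K : {set 'I_n} => (-1) ^+ #|K| * ((n - #|K|)`!)%:R)); last first.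
  by move=> K _; rewrite -sumA1; congr (_ * _); apply: eq_bigr => s _; rewrite mulr1.
rewrite (@sum_by_card R _ (fun k => (-1) ^+ k * ((n - k)`!)%:R)) card_ord mulr_sumr.
apply: eq_bigr => k _.
have hk : (k <= n)%N by rewrite -ltnS ltn_ord.
have f0 : (k`!)%:R != 0 :> R by rewrite pnatr_eq0 -lt0n fact_gt0.
rewrite -(bin_fact hk) !natrM; field.
exact: f0.
Qed.

Lemma der_sg (R : realType) m :
  \sum_(s : 'S_m.+2) ([set i | s i == i] == set0)%:R * ((-1) ^+ odd_perm s : R) =
  (-1) ^+ m.+2 + (m.+2)%:R * (-1) ^+ m.+1.
Proof.
rewrite der_sum.
rewrite (eq_bigr (fun K : {set 'I_m.+2} => (-1) ^+ #|K| * ((m.+2 - #|K| <= 1)%N)%:R)); last first.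
  by move=> K _; rewrite -sumA2.
rewrite (@sum_by_card R _ (fun k => (-1) ^+ k * ((m.+2 - k <= 1)%N)%:R)) card_ord.
rewrite big_ord_recr big_ord_recr /= big1 ?add0r; last first.
  move=> k _ /=; rewrite (_ : (m.+2 - k <= 1)%N = false) ?mulr0 //.
  apply/negbTE; rewrite -ltnNge; have := ltn_ord k; lia.
rewrite binn subnn binSn subSnn /= mulr1 mul1r mulr1 addrC; done.
Qed.
Lemma fact_tail (R : realType) (n : nat) (hn : (1 <= n)%N) (j : nat) :
  \sum_(n.+1 <= k < n.+1 + j) ((k`!)%:R : R)^-1 <= (n`!)%:R^-1 - ((n + j)`!)%:R^-1.
Proof.
elim: j => [|j IH].
  rewrite !addn0 big_geq //; lra.
rewrite addnS big_nat_recr; last by apply: leq_addr.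
have e : (n.+1 + j)`! = ((n+j).+1)`! by rewrite addSn.
rewrite e addnS.
rewrite factS natrM invfM.

set y := ((n + j)`!)%:R^-1 : R.
set z := ((n + j).+1%:R : R)^-1.
have y0 : 0 <= y by rewrite invr_ge0 ler0n.
have z2 : z <= 2^-1.
  rewrite /z lef_pV2 ?posrE ?ltr0n //.
  by rewrite ler_nat ltnS; apply: leq_trans hn (leq_addr _ _).
have : z * y <= 2^-1 * y by rewrite ler_wpM2r.
move=> h; apply: le_trans (lerD IH (lexx _)) _; rewrite -/y; lra.
Qed.

Lemma exp_m1_approx (R : realType) (n : nat) (hn : (1 <= n)%N) :
  `| \sum_(k < n.+1) (-1) ^+ k / ((k`!)%:R : R) - expR (-1 : R) | <= (n`!)%:R^-1.
Proof.
set c := \sum_(k < n.+1) _.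
have tail : forall m, (n.+1 <= m)%N ->
    `| series (exp_coeff (-1 : R)) m - c | <= (n`!)%:R^-1.
  move=> m hm; rewrite seriesEnat /= (@big_cat_nat _ _ _ n.+1) //= big_mkord.
  have -> : \sum_(i < n.+1) exp_coeff (-1 : R) i = c by [].
  rewrite addrAC subrr add0r.
  apply: le_trans (ler_norm_sum _ _ _) _.
  have hf := fact_tail R n hn (m - n.+1).
  have hy : 0 <= ((n + (m - n.+1))`!)%:R^-1 :> R by rewrite invr_ge0 ler0n.
  rewrite (subnKC hm) in hf.
  apply: le_trans (_ : _ <= \sum_(n.+1 <= k < m) ((k`!)%:R:R)^-1) _; last lra.
  rewrite le_eqVlt; apply/orP; left; apply/eqP; apply: eq_bigr => k _.
  by rewrite /exp_coeff /= normrM normrX normrN normr1 expr1n mul1r ger0_norm // invr_ge0 ler0n.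
have cv := is_cvg_series_exp_coeff (-1 : R).
rewrite distrC ler_norml; apply/andP; split.
- rewrite lerBrDr /expR; apply: limr_ge => //.
  near=> m.
  have hm : (n.+1 <= m)%N by near: m; exact: nbhs_infty_ge.
  move: (tail m hm); rewrite ler_norml => /andP[h1 h2]; lra.
- rewrite lerBlDr /expR; apply: limr_le => //.
  near=> m.
  have hm : (n.+1 <= m)%N by near: m; exact: nbhs_infty_ge.
  move: (tail m hm); rewrite ler_norml => /andP[h1 h2]; lra.
Unshelve. all: end_near.
Qed.

Lemma sconst (R : realType) (T : finType) (c : R) : \sum_(i : T) c = c *+ #|T|.
Proof. by rewrite sumr_const. Qed.


Lemma std_expand (R : realType) n (s : 'S_n) :
  ch_std R s = \sum_(i : 'I_n) (([set i] \subset [set i | s i == i])%:R : R)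
               - (set0 \subset [set i | s i == i])%:R.
Proof.
rewrite /ch_std my_card_sum sub0set; congr (_ - _).
by apply: eq_bigr => i _; rewrite sub1set.
Qed.

Lemma sum_std (R : realType) m : \sum_(s : 'S_m.+3) ch_std R s = 0.
Proof.
rewrite (eq_bigr _ (fun (s : 'S_m.+3) _ => @std_expand R m.+3 s)) sumrB exchange_big /=.
rewrite (eq_bigr (fun i => ((m.+2)`!)%:R)); last first.
  by move=> i _; rewrite sumA1 cards1.
by rewrite sumA1 cards0 sconst card_ord subn0 [(m.+3)`!]factS natrM mulr_natl subrr.
Qed.

Lemma sum_sg_std (R : realType) m :
  \sum_(s : 'S_m.+3) (-1) ^+ odd_perm s * ch_std R s = 0.
Proof.
rewrite (eq_bigr (fun s : 'S_m.+3 => \sum_(i : 'I_m.+3)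
   (([set i] \subset [set i | s i == i])%:R * (-1) ^+ odd_perm s)
   - (set0 \subset [set i | s i == i])%:R * (-1) ^+ odd_perm s)); last first.
  by move=> s _; rewrite std_expand mulrC mulrBl mulr_suml.
rewrite sumrB exchange_big /= sumA2 cards0 subn0 (_ : (m.+3 <= 1)%N = false) //.
rewrite big1 ?sub0r ?oppr0 // => i _.
by rewrite sumA2 cards1 (_ : (m.+3 - 1 <= 1)%N = false).
Qed.

Lemma e1 (R : realType) (k : nat) : (k.+1%:R : R) - 1 = k%:R.
Proof. by rewrite -natr1 addrK. Qed.

Lemma abs_std (R : realType) n (s : 'S_n) :
  `|ch_std R s| = ch_std R s + 2 * ([set i | s i == i] == set0)%:R.
Proof.
rewrite /ch_std -cards_eq0; case: #|_| => [|k].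
  by rewrite /= sub0r normrN normr1; lra.
by rewrite e1 normr_nat /= mulr0 addr0.
Qed.

Theorem lemma5p5 (R : realType) (n t : nat) (hn : (3 <= n)%N) :
  `| M1 R n t - (n - 1)%:R / expR 1 * ((n - 3)%:R / (n - 1)%:R) ^+ t |
    <= ((n - 2)`!)%:R^-1.
Proof.
case: n hn => [|[|[|m]]] // _.
have h1 : (m.+3 - 1 = m.+2)%N by lia.
have h2 : (m.+3 - 2 = m.+1)%N by lia.
have h3 : (m.+3 - 3 = m)%N by lia.
rewrite h1 h2 h3.
set a : R := m%:R / m.+2%:R.
set p : R := ((m.+3)`!)%:R.
have K0 : (m.+2)%:R != 0 :> R by rewrite pnatr_eq0.
have p0 : 0 < p by rewrite ltr0n fact_gt0.
have a0 : 0 <= a by rewrite /a divr_ge0 ?ler0n.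
have a1 : a <= 1.
  by rewrite /a ler_pdivrMr ?ltr0n // mul1r ler_nat; lia.
have dstd : dimch (ch_std R (n:=m.+3)) = m.+2%:R.
  rewrite /dimch /ch_std.
  have -> : [set i | (1%g : 'S_m.+3) i == i] = setT by apply/setP => i; rewrite !inE perm1 eqxx.
  by rewrite cardsT card_ord e1.
have dalt : dimch (ch_alt R (n:=m.+3)) = m.+2%:R.
  by rewrite /dimch /ch_alt odd_perm1 expr0 mul1r; exact: dstd.
have fixT : #|[set i | transp0 m.+3 i == i]| = m.+1.
  rewrite /transp0; set x := ord0; set y := lift ord0 ord0.
  have xy : x != y by [].
  have -> : [set i | tperm x y i == i] = ~: [set x; y].
    apply/setP => i; rewrite !inE.
    case: tpermP => [->|->|/eqP/negbTE-> /eqP/negbTE->].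
    - by rewrite eq_sym (negbTE xy) eqxx.
    - by rewrite (negbTE xy) eqxx orbT.
    - by rewrite eqxx.
  by rewrite cardsCs finset.setCK card_ord cards2 xy.
have ostd : odd_perm (transp0 m.+3) = true by rewrite /transp0 odd_tperm.
have sT : ch_std R (transp0 m.+3) = m%:R by rewrite /ch_std fixT e1.
have cstd : chi_norm (ch_std R (n:=m.+3)) (transp0 m.+3) = a.
  by rewrite /chi_norm dstd sT.
have calt : chi_norm (ch_alt R (n:=m.+3)) (transp0 m.+3) = - a.
  by rewrite /chi_norm dalt /ch_alt ostd expr1 mulN1r sT mulNr.
set c : R := m.+2%:R / p * a ^+ t.
have c0 : 0 <= c by rewrite /c mulr_ge0 ?exprn_ge0 // divr_ge0 ?ler0n // ltW.
have key : forall s : 'S_m.+3, inE_T t s ->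
  \sum_(ch <- [:: ch_std R (n:=m.+3); ch_alt R (n:=m.+3)])
     (dimch ch / (m.+3)`!%:R * chi_norm ch (transp0 m.+3) ^+ t * ch s)
   = 2 * c * ch_std R s.
  move=> s hs; rewrite !big_cons big_nil addr0 dstd dalt cstd calt exprNn -signr_odd.
  rewrite /ch_alt (eqP hs) /c /p.
  by case: (odd t); rewrite ?expr0 ?expr1; ring.
have hM : M1 R m.+3 t = c * \sum_(s : 'S_m.+3 | inE_T t s) `|ch_std R s|.
  rewrite /M1 (eq_bigr (fun s => 2 * (c * `|ch_std R s|))); last first.
    by move=> s hs; rewrite key // normrM normrM (ger0_norm c0) ger0_norm // mulrA.
  by rewrite -mulr_sumr -mulr_sumr mulKf // pnatr_eq0.
rewrite hM.
have hS : \sum_(s : 'S_m.+3 | inE_T t s) `|ch_std R s| =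
   p * (\sum_(k < m.+4) (-1) ^+ k / ((k`!)%:R : R))
   + (-1) ^+ odd t * ((-1) ^+ m.+3 + m.+3%:R * (-1) ^+ m.+2).
  rewrite /inE_T (eq_bigr _ (fun (s : 'S_m.+3) _ => @abs_std R m.+3 s)) big_split /= -mulr_sumr.
  rewrite !sum_parity sum_std sum_sg_std.
  have D1 : \sum_(s : 'S_m.+3) (([set i | s i == i] == set0)%:R : R) =
      p * (\sum_(k < m.+4) (-1) ^+ k / ((k`!)%:R : R)).
    by rewrite -der_one; apply: eq_bigr => s _; rewrite mulr1.
  have D2 : \sum_(s : 'S_m.+3) (-1) ^+ odd_perm s * (([set i | s i == i] == set0)%:R : R) =
      (-1) ^+ m.+3 + m.+3%:R * (-1) ^+ m.+2.
    by rewrite -der_sg; apply: eq_bigr => s _; rewrite mulrC.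
  by rewrite D1 D2; field.
have e3 : (m.+3%:R : R) = m.+2%:R + 1 by rewrite natr1.
have hD : (-1) ^+ m.+3 + m.+3%:R * (-1) ^+ m.+2 = (-1) ^+ m * (m.+2%:R : R).
  by rewrite !exprS e3; ring.
rewrite hS hD.
set u := (-1) ^+ odd t * ((-1) ^+ m * (m.+2%:R : R)).
set K : R := m.+2%:R.
set A : R := a ^+ t.
set Q : R := ((m.+1)`!)%:R.
set E1 := \sum_(k < m.+4) _.
have hu : `|u| = K.
  by rewrite /u !normrM !normrX normrN normr1 !expr1n !mul1r normr_nat.
have hE : `|E1 - expR (-1)| <= p^-1 by exact: (@exp_m1_approx R m.+3).
have Kp : 0 < K by rewrite ltr0n.
have Qp : 0 < Q by rewrite ltr0n fact_gt0.
have A0 : 0 <= A by rewrite exprn_ge0.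
have A1 : A <= 1 by rewrite exprn_ile1.
have hpQ : p = m.+3%:R * K * Q.
  by rewrite /p /K /Q -!natrM -mulnA -!factS.
have pn0 : p != 0 by rewrite gt_eqF.
rewrite -expRN.
rewrite (_ : c * (p * E1 + u) - K * expR (-1) * A = K * A * (E1 - expR (-1) + u / p)); last first.
  by rewrite /c /A /K; field.
have hX : `|E1 - expR (-1) + u / p| <= (1 + K) / p.
  apply: le_trans (ler_normD _ _) _; rewrite normrM normfV (gtr0_norm p0) hu.
  have : 0 < p^-1 by rewrite invr_gt0.
  move: hE; nra.
have KA0 : 0 <= K * A by rewrite mulr_ge0 // ltW.
rewrite normrM (ger0_norm KA0).
apply: le_trans (ler_wpM2l KA0 hX) _.
have hh1 : 0 <= (1 + K) / p by apply: divr_ge0; [lra | exact: ltW].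
have : K * A * ((1 + K) / p) <= K * ((1 + K) / p).
  by apply: ler_wpM2r; [exact: hh1 | nra].
suff -> : K * ((1 + K) / p) = Q^-1 by [].
rewrite hpQ e3; field.
by rewrite !gt_eqF.
Qed.
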